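(* Let $K\ge 2$, let $\mathcal V=\{\mathbf v\in\{0,1\}^K:\sum_i \mathbf v_i=1\}$ be the set of one-hot vectors, let $\boldsymbol\pi$ be a probability vector on $K$ categories, and let $(\alpha_t)_{t\in[0,1]}$ be a noise schedule with values in $[0,1]$, monotonically decreasing in $t$, with $\alpha_1=0$ and $\alpha_t>0$ for $t<1$. Fix $\mathbf x\in\mathcal V$ and define the forward marginals $q_t(\cdot\mid \mathbf x)=\mathrm{Cat}(\cdot;\alpha_t\mathbf x+(1-\alpha_t)\boldsymbol\pi)$. For $0\le s<t\le 1$ let $q_{s|t}(\cdot\mid \mathbf z_t,\mathbf x)$ denote the true reverse posterior of the Markovian forward process, i.e. $q_{s|t}(\mathbf z_s\mid\mathbf z_t,\mathbf x)=q_{t|s}(\mathbf z_t\mid\mathbf z_s)\,q_s(\mathbf z_s\mid\mathbf x)/q_t(\mathbf z_t\mid\mathbf x)$ with forward transition $q_{t|s}(\cdot\mid\mathbf z_s)=\mathrm{Cat}(\cdot;\tfrac{\alpha_t}{\alpha_s}\mathbf z_s+(1-\tfrac{\alpha_t}{\alpha_s})\boldsymbol\pi)$. Let $T\ge1$, $t(i)=i/T$ for $0\le i\le T$, and let $(\kappa_t)$ be numbers in $[0,1]$. Define the $\Psi$-posteriors $$\Psi_{s|t}(\cdot\mid\mathbf x,\mathbf z_t)=\kappa_t\,q_{s|t}(\cdot\mid\mathbf z_t,\mathbf x)+(1-\kappa_t)\,q_s(\cdot\mid\mathbf x)$$ for $(s,t)=(t(i-1),t(i))$, $\Psi_1(\cdot\mid\mathbf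 x)=\mathrm{Cat}(\cdot;\boldsymbol\pi)$, and define the marginals recursively by $\Psi_{t(i-1)}(\mathbf z_s\mid\mathbf x)=\sum_{\tilde{\mathbf z}_t\in\mathcal V}\Psi_{t(i)}(\tilde{\mathbf z}_t\mid\mathbf x)\,\Psi_{t(i-1)|t(i)}(\mathbf z_s\mid\tilde{\mathbf z}_t,\mathbf x)$. Then for every $0\le i\le T$, $\Psi_{t(i)}(\cdot\mid\mathbf x)=q_{t(i)}(\cdot\mid\mathbf x)$.
   Context: $\mathrm{Cat}(\cdot;\mathbf v)$ is the categorical distribution on $\mathcal V$ assigning probability $\mathbf v_i$ to the $i$-th one-hot vector. The construction is applied independently to each token of a sequence; the statement concerns a single token. *)

(* Defs.v *)
From mathcomp Require Import all_boot all_order all_algebra.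
Set Implicit Arguments. Unset Strict Implicit. Unset Printing Implicit Defensive.
Import Order.TTheory GRing.Theory Num.Theory.
Local Open Scope ring_scope.

Section Defs.
Variables (R : realFieldType) (K : nat).

(* A one-hot vector e_j in V is identified with its index j : 'I_K;
   [onehot j] is the corresponding vector of {0,1}^K. *)
Definition onehot (j : 'I_K) : 'I_K -> R := fun i => (i == j)%:R.

Definition Cat (v : 'I_K -> R) (j : 'I_K) : R := v j.

Definition is_prob_vec (p : 'I_K -> R) : Prop :=
  (forall j, 0 <= p j) /\ \sum_j p j = 1.

Variables (alpha : R -> R) (pi : 'I_K -> R).

Definition q_marg (t : R) (x z : 'I_K) : R :=
  Cat (fun i => alpha t * onehot x i + (1 - alpha t) * pi i) z.

Definition q_trans (s t : R) (zs zt : 'I_K) : R :=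
  Cat (fun i => alpha t / alpha s * onehot zs i + (1 - alpha t / alpha s) * pi i) zt.

Definition q_post (s t : R) (x zt zs : 'I_K) : R :=
  q_trans s t zs zt * q_marg s x zs / q_marg t x zt.

Variable (kappa : R -> R).

Definition Psi_post (s t : R) (x zt zs : 'I_K) : R :=
  kappa t * q_post s t x zt zs + (1 - kappa t) * q_marg s x zs.

Variable (T : nat).

Definition tgrid (i : nat) : R := i%:R / T%:R.

(* Psi_rec n x = marginal Psi_{t(T - n)}(. | x), defined by backward recursion
   from Psi_1 = Cat(. ; pi). *)
Fixpoint Psi_rec (n : nat) (x : 'I_K) : 'I_K -> R :=
  match n with
  | 0%N => fun z => Cat pi z
  | n'.+1 => fun zs =>
      \sum_(zt < K) Psi_rec n' x zt *
        Psi_post (tgrid (T - n').-1) (tgrid (T - n')) x zt zs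
  end.

Definition Psi_marg (i : nat) (x z : 'I_K) : R := Psi_rec (T - i) x z.

End Defs.

(* Main.v *)
Require Import Defs.
From mathcomp Require Import all_boot all_order all_algebra.
From mathcomp Require Import ring lra.
Import Order.TTheory GRing.Theory Num.Theory.
Local Open Scope ring_scope.

Section Aux.
Variables (R : realFieldType) (K : nat).

Lemma sum_oh (y : 'I_K) : \sum_(j < K) ((j == y)%:R : R) = 1.
Proof.
rewrite (bigD1 y) //= eqxx big1 ?addr0 // => j /negbTE ->; done.
Qed.

Lemma sum_oh_mul (f : 'I_K -> R) (y : 'I_K) :
  \sum_(j < K) (j == y)%:R * f j = f y.
Proof.
rewrite (bigD1 y) //= eqxx mul1r big1 ?addr0 // => j /negbTE ->; by rewrite mul0r.
Qed.

Lemma sum_mix (v : 'I_K -> R) (a : R) (y : 'I_K) :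
  \sum_(j < K) (a * (j == y)%:R + (1 - a) * v j) = a + (1 - a) * \sum_j v j.
Proof.
by rewrite big_split /= -!mulr_sumr sum_oh mulr1.
Qed.
End Aux.

Theorem mainTheorem1 (R : realFieldType) (K : nat) (pi : 'I_K -> R)
  (alpha kappa : R -> R) (T : nat) (x : 'I_K) :
  (2 <= K)%N ->
  is_prob_vec pi ->
  (forall t, 0 <= t <= 1 -> 0 <= alpha t <= 1) ->
  (forall s t, 0 <= s -> s <= t -> t <= 1 -> alpha t <= alpha s) ->
  alpha 1 = 0 ->
  (forall t, 0 <= t < 1 -> 0 < alpha t) ->
  (1 <= T)%N ->
  (forall i, (i <= T)%N -> 0 <= kappa (tgrid R T i) <= 1) ->
  forall i, (i <= T)%N -> forall z : 'I_K,
    Psi_marg alpha pi kappa T i x z = q_marg alpha pi (tgrid R T i) x z.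
Proof.
move=> _ [pi0 pi1] a01 amono a1 apos T1 _ i iT z.
have T0 : (0 : R) < T%:R by rewrite ltr0n.
have tg0 : forall j, 0 <= tgrid R T j by move=> j; rewrite /tgrid divr_ge0.
have tg1 : forall j, (j <= T)%N -> tgrid R T j <= 1.
  by move=> j jT; rewrite /tgrid ler_pdivrMr // mul1r ler_nat.
have tglt : forall j, (j < T)%N -> tgrid R T j < 1.
  by move=> j jT; rewrite /tgrid ltr_pdivrMr // mul1r ltr_nat.
have tgle : forall j k, (j <= k)%N -> tgrid R T j <= tgrid R T k.
  by move=> j k jk; rewrite /tgrid ler_pM2r ?invr_gt0 // ler_nat.
rewrite /Psi_marg.
have key : forall n, (n <= T)%N -> forall z,
    Psi_rec alpha pi kappa T n x z = q_marg alpha pi (tgrid R T (T - n)) x z.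
  elim=> [|n IH] nT zs.
    by rewrite subn0 /= /q_marg /Cat /tgrid divff ?gt_eqF // a1 mul0r add0r subr0 mul1r.
  rewrite /=.
  set t := tgrid R T (T - n).
  set s := tgrid R T (T - n).-1.
  have hs : (T - n).-1 = (T - n.+1)%N by rewrite subnS.
  have sT : ((T - n).-1 < T)%N by rewrite hs ltn_subrL /=; exact: leq_trans nT.
  have s01 := a01 s (introT andP (conj (tg0 _) (tg1 _ (ltnW sT)))).
  have t01 := a01 t (introT andP (conj (tg0 _) (tg1 _ (leq_subr _ _)))).
  have aspos : 0 < alpha s by apply: apos; rewrite tg0 tglt.
  have ats : alpha t <= alpha s.
    apply: (amono s t (tg0 _) (tgle _ _ (leq_pred _)) (tg1 _ (leq_subr _ _))).
  set r := alpha t / alpha s.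
  have r0 : 0 <= r by apply: divr_ge0; [case/andP: t01 | exact: ltW].
  have r1 : r <= 1 by rewrite ler_pdivrMr // mul1r.
  have rs : r * alpha s = alpha t by rewrite /r mulrVK ?unitfE ?gt_eqF.
  have qs0 : forall j, 0 <= q_marg alpha pi s x j.
    move=> j; rewrite /q_marg /Cat; case/andP: s01 => ? ?.
    apply: addr_ge0; apply: mulr_ge0; rewrite ?subr_ge0 // /onehot ler0n.
  have qtr0 : forall zs zt, 0 <= q_trans alpha pi s t zs zt.
    move=> a b; rewrite /q_trans /Cat -/r.
    apply: addr_ge0; apply: mulr_ge0; rewrite ?subr_ge0 // /onehot ler0n.
  have trsum : forall a, \sum_zt q_trans alpha pi s t a zt = 1.
    move=> a; rewrite /q_trans /Cat /onehot -/r.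
    by rewrite sum_mix pi1 mulr1 addrC subrK.
  have qtsum : \sum_zt q_marg alpha pi t x zt = 1.
    by rewrite /q_marg /Cat /onehot sum_mix pi1 mulr1 addrC subrK.
  have CK : forall zt, \sum_a q_marg alpha pi s x a * q_trans alpha pi s t a zt
                       = q_marg alpha pi t x zt.
    move=> zt.
    transitivity (\sum_a ((a == zt)%:R * (q_marg alpha pi s x a * r)
       + q_marg alpha pi s x a * ((1 - r) * pi zt))).
      apply: eq_bigr => a _; rewrite /q_trans /Cat /onehot -/r (eq_sym zt a); ring.
    rewrite big_split /= sum_oh_mul -mulr_suml.
    have -> : \sum_a q_marg alpha pi s x a = 1.
      by rewrite /q_marg /Cat /onehot sum_mix pi1 mulr1 addrC subrK.
    rewrite /q_marg /Cat /onehot -rs; ring.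
  have zero : forall zt, q_marg alpha pi t x zt = 0 ->
      q_trans alpha pi s t zs zt * q_marg alpha pi s x zs = 0.
    move=> zt H; rewrite -CK in H.
    move/psumr_eq0P: H => H; rewrite mulrC; apply: H => // j _.
    by rewrite mulr_ge0.
  under eq_bigr => zt _ do rewrite IH ?(leq_trans (leqnSn n)) // -/t.
  rewrite /Psi_post /q_post.
  transitivity (\sum_zt (kappa t * (q_trans alpha pi s t zs zt * q_marg alpha pi s x zs)
       + (1 - kappa t) * q_marg alpha pi s x zs * q_marg alpha pi t x zt)).
    apply: eq_bigr => zt _.
    have [H|H] := eqVneq (q_marg alpha pi t x zt) 0.
      rewrite H zero // invr0 !mulr0 mul0r; ring.
    by field.
  rewrite big_split /= -!mulr_sumr -mulr_suml trsum qtsum.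
  rewrite /s hs; ring.
by rewrite key ?leq_subr // subKn.
Qed.
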